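(* Let $a_n$ be the number of equivalence classes of period configurations of Parallel Diffusion on the unlabelled complete graph $K_n$, and let $\alpha\approx 3.2056$ be the unique real root of $x^3-5x^2+7x-4$. Then $a_n\sim c\,\alpha^n$ as $n\to\infty$ for a constant $c\approx 0.1809$; that is, $a_n/\alpha^n$ converges to a positive constant approximately equal to $0.1809$.
   Context: Parallel Diffusion on a graph $G$: a configuration assigns an integer stack size $|v|$ to each vertex. One firing step replaces every stack size simultaneously by $|v| + \#\{u\in N(v): |u|>|v|\} - \#\{u\in N(v): |u|<|v|\}$. A period configuration is a configuration $D$ such that repeated firing starting from $D$ returns to $D$ after some positive number of steps. On the complete graph $K_n$ with unlabelled vertices, a configuration is a multiset of $n$ integers. Two configurations are equivalent if one is obtained from the other by adding the same integer to every stack size. *)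

(* Defs.v *)
From Stdlib Require Import ZArith List Permutation Reals.
Import ListNotations.

(* On K_n every other vertex
   is a neighbour; the vertex itself is never counted since x < x is false. *)
Definition fire (s : list Z) : list Z :=
  map (fun x => (x + Z.of_nat (length (filter (fun y => Z.ltb x y) s))
                   - Z.of_nat (length (filter (fun y => Z.ltb y x) s)))%Z) s.

(* Unlabelled configuration = multiset; lists are compared up to Permutation.
   A period configuration returns to itself (as a multiset) after some
   positive number of firing steps. *)
Definition period_config (s : list Z) : Prop :=
  exists k : nat, (0 < k)%nat /\ Permutation (Nat.iter k fire s) s.

Definition config_equiv (s t : list Z) : Prop :=
  exists c : Z, Permutation s (map (fun x => (x + c)%Z) t).

Definition num_period_classes (n m : nat) : Prop :=
  exists L : list (list Z),
    length L = m /\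
    Forall (fun s => length s = n /\ period_config s) L /\
    ForallOrdPairs (fun s t => ~ config_equiv s t) L /\
    (forall s, length s = n -> period_config s -> Exists (config_equiv s) L).

(* Main.v *)
Require Import Defs.
From Stdlib Require Import ZArith List Permutation Reals Lia Lra Psatz.
Import ListNotations.

Section DynS.
Local Open Scope Z_scope.

Definition gtc (s : list Z) (x : Z) : Z := Z.of_nat (length (filter (fun y => Z.ltb x y) s)).
Definition ltc (s : list Z) (x : Z) : Z := Z.of_nat (length (filter (fun y => Z.ltb y x) s)).
Definition hh (s : list Z) (x : Z) : Z := x + gtc s x - ltc s x.

Lemma fire_eq s : fire s = map (hh s) s.
Proof. reflexivity. Qed.

Definition RR (s : list Z) : Prop :=
  forall a b, In a s -> In b s -> a < b -> hh s b < hh s a.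

Lemma filter_map_len {X Y} (p : Y -> bool) (f : X -> Y) (l : list X) :
  length (filter p (map f l)) = length (filter (fun x => p (f x)) l).
Proof. induction l; simpl; auto. destruct (p (f a)); simpl; auto. Qed.

Lemma RR_fire2 s : RR s -> fire (fire s) = s.
Proof.
  intro HR. rewrite !fire_eq, map_map.
  rewrite <- (map_id s) at 2. apply map_ext_in. intros a Ha.
  unfold hh at 1. unfold gtc, ltc. rewrite !filter_map_len.
  rewrite (filter_ext_in (fun x => hh s a <? hh s x) (fun b => b <? a) s).
  2:{ intros b Hb. destruct (Z.lt_trichotomy a b) as [h|[h|h]].
      - specialize (HR a b Ha Hb h). destruct (Z.ltb_spec (hh s a) (hh s b)); destruct (Z.ltb_spec b a); lia.
      - subst. destruct (Z.ltb_spec (hh s b) (hh s b)); destruct (Z.ltb_spec b b); lia.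
      - specialize (HR b a Hb Ha h). destruct (Z.ltb_spec (hh s a) (hh s b)); destruct (Z.ltb_spec b a); lia. }
  rewrite (filter_ext_in (fun x => hh s x <? hh s a) (fun b => a <? b) s).
  2:{ intros b Hb. destruct (Z.lt_trichotomy a b) as [h|[h|h]].
      - specialize (HR a b Ha Hb h). destruct (Z.ltb_spec (hh s b) (hh s a)); destruct (Z.ltb_spec a b); lia.
      - subst. destruct (Z.ltb_spec (hh s b) (hh s b)); destruct (Z.ltb_spec b b); lia.
      - specialize (HR b a Hb Ha h). destruct (Z.ltb_spec (hh s b) (hh s a)); destruct (Z.ltb_spec a b); lia. }
  unfold hh, gtc, ltc. lia.
Qed.

Lemma RR_period s : RR s -> period_config s.
Proof.
  intro H. exists 2%nat. split. lia. simpl. rewrite (RR_fire2 s H). apply Permutation_refl.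
Qed.

Definition S1 {X} (f : X -> Z) (l : list X) : Z := fold_right Z.add 0 (map f l).
Definition DS (f : Z -> Z -> Z) (s : list Z) : Z := S1 (fun a => S1 (f a) s) s.

Lemma S1_cons {X} f (x : X) l : S1 f (x :: l) = f x + S1 f l.
Proof. reflexivity. Qed.
Lemma S1_nil {X} (f : X -> Z) : S1 f [] = 0.
Proof. reflexivity. Qed.
Lemma S1_app {X} f (l1 l2 : list X) : S1 f (l1 ++ l2) = S1 f l1 + S1 f l2.
Proof. induction l1; simpl; auto. rewrite !S1_cons, IHl1. lia. Qed.

Lemma S1_perm {X} f (l1 l2 : list X) : Permutation l1 l2 -> S1 f l1 = S1 f l2.
Proof. induction 1; rewrite ?S1_cons; lia. Qed.

Lemma S1_ext_in {X} (f g : X -> Z) l : (forall x, In x l -> f x = g x) -> S1 f l = S1 g l.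
Proof. intro H. unfold S1. f_equal. apply map_ext_in. auto. Qed.

Lemma S1_add {X} (f g : X -> Z) l : S1 (fun x => f x + g x) l = S1 f l + S1 g l.
Proof. induction l; [rewrite !S1_nil; lia | rewrite !S1_cons, IHl; lia]. Qed.

Lemma S1_sub {X} (f g : X -> Z) l : S1 (fun x => f x - g x) l = S1 f l - S1 g l.
Proof. induction l; [rewrite !S1_nil; lia | rewrite !S1_cons, IHl; lia]. Qed.

Lemma S1_scal {X} k (f : X -> Z) l : S1 (fun x => k * f x) l = k * S1 f l.
Proof. induction l; [rewrite !S1_nil; lia | rewrite !S1_cons, IHl; lia]. Qed.

Lemma S1_map {X Y} (f : Y -> Z) (g : X -> Y) l : S1 f (map g l) = S1 (fun x => f (g x)) l.
Proof. unfold S1. rewrite map_map. auto. Qed.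

Lemma S1_nonneg {X} (f : X -> Z) l : (forall x, In x l -> 0 <= f x) -> 0 <= S1 f l.
Proof. induction l; intros H; rewrite ?S1_cons, ?S1_nil. lia.
  assert (0 <= f a) by (apply H; left; auto). assert (0 <= S1 f l) by (apply IHl; intros; apply H; right; auto). lia. Qed.

Lemma S1_zero {X} (f : X -> Z) l : (forall x, In x l -> 0 <= f x) -> S1 f l = 0 -> forall x, In x l -> f x = 0.
Proof. induction l; intros H E x Hx. destruct Hx.
  rewrite S1_cons in E.
  assert (0 <= f a) by (apply H; left; auto). assert (0 <= S1 f l) by (apply S1_nonneg; intros; apply H; right; auto).
  destruct Hx as [<-|Hx]. lia. apply IHl; auto. intros; apply H; right; auto. lia. Qed.

Definition DD (f : Z -> Z -> Z) l1 l2 := S1 (fun a => S1 (f a) l2) l1.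

Lemma DD_swap f l1 l2 : DD f l1 l2 = DD (fun a b => f b a) l2 l1.
Proof.
  revert l2; induction l1; intros l2; unfold DD in *.
  - rewrite S1_nil. symmetry. induction l2; rewrite ?S1_cons, ?S1_nil; auto.
  - rewrite S1_cons, IHl1. rewrite <- S1_add. reflexivity.
Qed.

Lemma DS_swap f s : DS f s = DS (fun a b => f b a) s.
Proof. apply (DD_swap f s s). Qed.

Lemma DS_scal k f s : DS (fun a b => k * f a b) s = k * DS f s.
Proof. unfold DS. rewrite <- S1_scal. apply S1_ext_in. intros. apply S1_scal. Qed.

Lemma DS_antisym f s : (forall a b, f a b + f b a = 0) -> DS f s = 0.
Proof.
  intro H. assert (E : DS f s = -1 * DS f s).
  { rewrite DS_swap at 1. rewrite <- DS_scal. unfold DS. apply S1_ext_in. intros a _.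
    apply S1_ext_in. intros b _. specialize (H a b). lia. }
  lia.
Qed.

Lemma DS_add f g s : DS (fun a b => f a b + g a b) s = DS f s + DS g s.
Proof. unfold DS. rewrite <- S1_add. apply S1_ext_in. intros. apply S1_add. Qed.
Lemma DS_sub f g s : DS (fun a b => f a b - g a b) s = DS f s - DS g s.
Proof. unfold DS. rewrite <- S1_sub. apply S1_ext_in. intros. apply S1_sub. Qed.
Lemma DS_ext f g s : (forall a b, In a s -> In b s -> f a b = g a b) -> DS f s = DS g s.
Proof. intro H. unfold DS. apply S1_ext_in. intros. apply S1_ext_in. auto. Qed.
Lemma DS_perm f s t : Permutation s t -> DS f s = DS f t.
Proof. intro P. unfold DS. rewrite (S1_perm _ s t P). apply S1_ext_in. intros. apply S1_perm; auto. Qed.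
Lemma DS_map f g s : DS f (map g s) = DS (fun a b => f (g a) (g b)) s.
Proof. unfold DS. rewrite S1_map. apply S1_ext_in. intros. apply S1_map. Qed.
Lemma DS_nonneg f s : (forall a b, In a s -> In b s -> 0 <= f a b) -> 0 <= DS f s.
Proof. intro H. apply S1_nonneg. intros. apply S1_nonneg. auto. Qed.
Lemma DS_zero f s : (forall a b, In a s -> In b s -> 0 <= f a b) -> DS f s = 0 ->
  forall a b, In a s -> In b s -> f a b = 0.
Proof.
  intros H E a b Ha Hb.
  assert (E1 := S1_zero _ _ (fun a Ha => S1_nonneg _ _ (fun b Hb => H a b Ha Hb)) E a Ha).
  exact (S1_zero _ _ (fun b Hb => H a b Ha Hb) E1 b Hb).
Qed.

Definition sg (x : Z) : Z := if 0 <? x then 1 else if x <? 0 then -1 else 0.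

Lemma sg_cnt s a : gtc s a - ltc s a = S1 (fun b => sg (b - a)) s.
Proof.
  unfold gtc, ltc. induction s as [|b s IH]. reflexivity.
  cbn [filter]. rewrite S1_cons. unfold sg at 1.
  destruct (Z.ltb_spec a b); destruct (Z.ltb_spec b a); destruct (Z.ltb_spec 0 (b - a)); destruct (Z.ltb_spec (b - a) 0);
  cbn [length]; rewrite ?Nat2Z.inj_succ; lia.
Qed.

Definition CC s a := S1 (fun b => sg (b - a)) s.
Lemma hh_CC s a : hh s a = a + CC s a.
Proof. unfold hh, CC. rewrite <- sg_cnt. lia. Qed.

Definition VV (s : list Z) := 2 * S1 (fun a => a * a) s - DS (fun a b => Z.abs (a - b)) s.
Definition EE (s : list Z) := DS (fun a b => if Z.eqb a b then 1 else 0) s.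

Definition TT s a b := Z.abs (hh s a - hh s b) - (hh s a - hh s b) * sg (b - a).

Lemma TT_nonneg s a b : 0 <= TT s a b.
Proof. unfold TT, sg. destruct (Z.ltb_spec 0 (b - a)); destruct (Z.ltb_spec (b - a) 0); lia. Qed.

Lemma VV_fire s : VV (fire s) + DS (TT s) s = VV s.
Proof.
  rewrite fire_eq. unfold VV. rewrite S1_map, DS_map.
  unfold TT. rewrite DS_sub.
  set (h := hh s).
  assert (K : 2 * S1 (fun a => h a * h a) s - 2 * S1 (fun a => a * a) s =
              DS (fun a b => (4 * a + 2 * CC s a) * sg (b - a)) s).
  { rewrite <- !S1_scal, <- S1_sub. unfold DS. apply S1_ext_in. intros a _.
    rewrite S1_scal. unfold h. rewrite hh_CC. unfold CC. ring. }
  assert (Z0 : DS (fun a b => (4 * a + 2 * CC s a) * sg (b - a) - (h a - h b) * sg (b - a) + Z.abs (a - b)) s = 0).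
  { apply DS_antisym. intros a b. unfold h. rewrite !hh_CC. unfold sg.
    destruct (Z.ltb_spec 0 (b - a)); destruct (Z.ltb_spec (b - a) 0);
    destruct (Z.ltb_spec 0 (a - b)); destruct (Z.ltb_spec (a - b) 0); lia. }
  rewrite DS_add, DS_sub in Z0. lia.
Qed.

Definition ind (a b : Z) := if Z.eqb a b then 1 else 0.
Lemma EE_fire s : EE (fire s) = EE s + DS (fun a b => ind (hh s a) (hh s b) - ind a b) s.
Proof.
  rewrite fire_eq. unfold EE. rewrite DS_map, DS_sub. fold ind. unfold ind. lia.
Qed.

Lemma ind_mono s a b : 0 <= ind (hh s a) (hh s b) - ind a b.
Proof. unfold ind. destruct (Z.eqb_spec a b). subst. rewrite Z.eqb_refl. lia.
  destruct (Z.eqb (hh s a) (hh s b)); lia. Qed.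

Lemma VV_mono s : VV (fire s) <= VV s.
Proof. pose proof (VV_fire s). assert (0 <= DS (TT s) s) by (apply DS_nonneg; intros; apply TT_nonneg). lia. Qed.
Lemma EE_mono s : EE s <= EE (fire s).
Proof. rewrite EE_fire. assert (0 <= DS (fun a b => ind (hh s a) (hh s b) - ind a b) s) by (apply DS_nonneg; intros; apply ind_mono). lia. Qed.

Lemma VV_iter k s : VV (Nat.iter k fire s) <= VV s.
Proof. induction k; simpl. lia. pose proof (VV_mono (Nat.iter k fire s)). lia. Qed.
Lemma EE_iter k s : EE s <= EE (Nat.iter k fire s).
Proof. induction k; simpl. lia. pose proof (EE_mono (Nat.iter k fire s)). lia. Qed.

Lemma VV_perm s t : Permutation s t -> VV s = VV t.
Proof. intro P. unfold VV. rewrite (S1_perm _ _ _ P), (DS_perm _ _ _ P). auto. Qed.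
Lemma EE_perm s t : Permutation s t -> EE s = EE t.
Proof. intro P. unfold EE. apply DS_perm; auto. Qed.

Lemma period_RR s : period_config s -> RR s.
Proof.
  intros [k [Hk P]]. destruct k as [|k]; [lia|].
  rewrite Nat.iter_succ_r in P.
  assert (V1 := VV_iter k (fire s)). assert (V2 := VV_mono s). assert (V3 := VV_perm _ _ P).
  assert (E1 := EE_iter k (fire s)). assert (E2 := EE_mono s). assert (E3 := EE_perm _ _ P).
  assert (VE : DS (TT s) s = 0) by (pose proof (VV_fire s); lia).
  assert (EE0 : DS (fun a b => ind (hh s a) (hh s b) - ind a b) s = 0) by (pose proof (EE_fire s); lia).
  intros a b Ha Hb Hab.
  assert (T0 := DS_zero _ _ (fun a b _ _ => TT_nonneg s a b) VE a b Ha Hb).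
  assert (I0 := DS_zero _ _ (fun a b _ _ => ind_mono s a b) EE0 a b Ha Hb).
  unfold TT, sg in T0. unfold ind in I0.
  destruct (Z.ltb_spec 0 (b - a)); [|lia].
  destruct (Z.eqb_spec a b); [lia|].
  destruct (Z.eqb_spec (hh s a) (hh s b)); lia.
Qed.

End DynS.

Section CntS.
Local Open Scope Z_scope.

Definition step (v : Z*Z*Z*Z) : Z*Z*Z*Z :=
  let '(a,b,c,h) := v in (a+b+c, a+2*b+c+h, a+c, a+c+h).
Fixpoint st (k : nat) : Z*Z*Z*Z := match k with O => (1,1,0,0) | S k => step (st k) end.
Definition gA (v : Z*Z*Z*Z) := let '(a,_,_,_) := v in a.
Definition gB (v : Z*Z*Z*Z) := let '(_,b,_,_) := v in b.
Definition gC (v : Z*Z*Z*Z) := let '(_,_,c,_) := v in c.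
Definition gH (v : Z*Z*Z*Z) := let '(_,_,_,h) := v in h.
Definition Ast (n : nat) : Z := match n with O => 0 | S k => gA (st k) end.
Definition Bst (n : nat) : Z := match n with O => 0 | S k => gB (st k) end.
Definition Cst (n : nat) : Z := match n with O => 0 | S k => gC (st k) end.
Definition Hst (n : nat) : Z := match n with O => 0 | S k => gH (st k) end.

Lemma st_S k : Ast (S (S k)) = Ast (S k) + Bst (S k) + Cst (S k) /\
  Bst (S (S k)) = Ast (S k) + 2 * Bst (S k) + Cst (S k) + Hst (S k) /\
  Cst (S (S k)) = Ast (S k) + Cst (S k) /\ Hst (S (S k)) = Ast (S k) + Cst (S k) + Hst (S k).
Proof. cbn [Ast Bst Cst Hst st]. destruct (st k) as [[[a b] c] h]. cbn [step gA gB gC gH]. lia. Qed.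

Lemma Ast_rec n : (2 <= n)%nat -> Ast (S (S (S n))) = 5 * Ast (S (S n)) - 7 * Ast (S n) + 4 * Ast n.
Proof.
  intro H. destruct n as [|[|k]]; try lia. cbn [Ast st step gA].
  destruct (st k) as [[[a b] c] h]. cbn [Ast st step gA]. lia.
Qed.

Lemma Ast_vals : Ast 2 = 2 /\ Ast 3 = 6 /\ Ast 4 = 19.
Proof. repeat split; reflexivity. Qed.

Definition zj (j : nat) := Z.of_nat j.

Lemma S1_seqS (f : nat -> Z) k : S1 f (seq 1 (S k)) = S1 f (seq 1 k) + f (S k).
Proof. rewrite seq_S, S1_app. simpl. rewrite S1_cons, S1_nil. lia. Qed.

Lemma state_sums : forall k,
  S1 Ast (seq 1 k) = Cst (S k) /\
  S1 (fun j => (zj k + 1 - zj j) * Ast j) (seq 1 k) = Hst (S k) /\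
  S1 Bst (seq 1 k) = Ast (S k) - 1 - Hst (S k) + Cst (S k) /\
  Bst (S k) = zj k + 1 + S1 (fun j => (zj k + 1 - zj j) * (zj k - zj j) * Ast j) (seq 1 k)
                      + S1 (fun j => (zj k + 1 - zj j) * Bst j) (seq 1 k).
Proof.
  induction k as [|k [IC [IH [IE IB]]]].
  - simpl. unfold zj. repeat split; reflexivity.
  - destruct (st_S k) as [SA [SB [SC SH]]].
    rewrite !S1_seqS.
    assert (H1 : S1 (fun j => (zj (S k) + 1 - zj j) * Ast j) (seq 1 k) =
                 S1 (fun j => (zj k + 1 - zj j) * Ast j) (seq 1 k) + S1 Ast (seq 1 k)).
    { rewrite <- S1_add. apply S1_ext_in. intros. unfold zj. rewrite Nat2Z.inj_succ. ring. }
    assert (H2 : S1 (fun j => (zj (S k) + 1 - zj j) * (zj (S k) - zj j) * Ast j) (seq 1 k) =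
                 S1 (fun j => (zj k + 1 - zj j) * (zj k - zj j) * Ast j) (seq 1 k)
                 + 2 * S1 (fun j => (zj k + 1 - zj j) * Ast j) (seq 1 k)).
    { rewrite <- S1_scal, <- S1_add. apply S1_ext_in. intros. unfold zj. rewrite Nat2Z.inj_succ. ring. }
    assert (H3 : S1 (fun j => (zj (S k) + 1 - zj j) * Bst j) (seq 1 k) =
                 S1 (fun j => (zj k + 1 - zj j) * Bst j) (seq 1 k) + S1 Bst (seq 1 k)).
    { rewrite <- S1_add. apply S1_ext_in. intros. unfold zj. rewrite Nat2Z.inj_succ. ring. }
    rewrite H1, H2, H3. unfold zj in *. rewrite !Nat2Z.inj_succ in *.
    repeat split; lia.
Qed.

End CntS.

Section GenS.
Local Open Scope Z_scope.

Definition fb (t : list Z) : nat := length (filter (Z.eqb 0) t).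
Definition gs (k : nat) : list Z := map Z.of_nat (seq 1 k).
Definition mk (m : nat) (g : Z) (t : list Z) : list Z := repeat 0 m ++ map (Z.add g) t.

Fixpoint Lf (fuel n : nat) : list (list Z) :=
  match fuel with
  | O => []
  | S f => repeat 0 n :: flat_map (fun j => flat_map (fun t =>
             map (fun g => mk (n - j) g t) (gs (n - j + fb t - 1))) (Lf f j)) (seq 1 (n - 1))
  end.

Lemma in_gs g k : In g (gs k) <-> 1 <= g <= Z.of_nat k.
Proof.
  unfold gs. rewrite in_map_iff. split.
  - intros [x [<- Hx]]. apply in_seq in Hx. lia.
  - intros H. exists (Z.to_nat g). split. lia. apply in_seq. lia.
Qed.

Lemma in_Lf f n t : In t (Lf (S f) n) <-> t = repeat 0 n \/
  exists j t' g, (1 <= j <= n - 1)%nat /\ In t' (Lf f j) /\ 1 <= g <= Z.of_nat (n - j + fb t' - 1) /\ t = mk (n - j) g t'.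
Proof.
  simpl. split.
  - intros [H|H]; [left; auto|right].
    apply in_flat_map in H as [j [Hj H]]. apply in_seq in Hj.
    apply in_flat_map in H as [t' [Ht' H]]. apply in_map_iff in H as [g [<- Hg]].
    apply in_gs in Hg. exists j, t', g. repeat split; auto; lia.
  - intros [H|[j [t' [g [Hj [Ht' [Hg ->]]]]]]]; [left; auto|right].
    apply in_flat_map. exists j. split. apply in_seq. lia.
    apply in_flat_map. exists t'. split. auto. apply in_map_iff. exists g. split; auto. apply in_gs. lia.
Qed.

Lemma gtc_app l1 l2 x : gtc (l1 ++ l2) x = gtc l1 x + gtc l2 x.
Proof. unfold gtc. rewrite filter_app, length_app. lia. Qed.
Lemma ltc_app l1 l2 x : ltc (l1 ++ l2) x = ltc l1 x + ltc l2 x.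
Proof. unfold ltc. rewrite filter_app, length_app. lia. Qed.
Lemma gtc_repeat z m x : gtc (repeat z m) x = if x <? z then Z.of_nat m else 0.
Proof. unfold gtc. induction m; simpl. destruct (x <? z); auto.
  destruct (x <? z); simpl; lia. Qed.
Lemma ltc_repeat z m x : ltc (repeat z m) x = if z <? x then Z.of_nat m else 0.
Proof. unfold ltc. induction m; simpl. destruct (z <? x); auto.
  destruct (z <? x); simpl; lia. Qed.
Lemma gtc_shift g l b : gtc (map (Z.add g) l) (g + b) = gtc l b.
Proof. unfold gtc. rewrite filter_map_len. f_equal. f_equal. apply filter_ext. intros y.
  destruct (Z.ltb_spec (g + b) (g + y)); destruct (Z.ltb_spec b y); lia. Qed.
Lemma ltc_shift g l b : ltc (map (Z.add g) l) (g + b) = ltc l b.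
Proof. unfold ltc. rewrite filter_map_len. f_equal. f_equal. apply filter_ext. intros y.
  destruct (Z.ltb_spec (g + y) (g + b)); destruct (Z.ltb_spec y b); lia. Qed.
Lemma hh_shift g l b : hh (map (Z.add g) l) (g + b) = g + hh l b.
Proof. unfold hh. rewrite gtc_shift, ltc_shift. lia. Qed.

Lemma gtc_all l x : Forall (fun y => x < y) l -> gtc l x = Z.of_nat (length l).
Proof. unfold gtc. intro H. induction l; simpl; auto. inversion H; subst.
  destruct (Z.ltb_spec x a); [|lia]. simpl length. specialize (IHl H3). lia. Qed.
Lemma ltc_none l x : Forall (fun y => x <= y) l -> ltc l x = 0.
Proof. unfold ltc. intro H. induction l; simpl; auto. inversion H; subst.
  destruct (Z.ltb_spec a x). lia. auto. Qed.

Lemma perm_filter_len {X} (p : X -> bool) l1 l2 : Permutation l1 l2 -> length (filter p l1) = length (filter p l2).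
Proof. induction 1; simpl; auto. destruct (p x); simpl; auto.
  destruct (p x); destruct (p y); simpl; auto. lia. Qed.
Lemma hh_perm s1 s2 x : Permutation s1 s2 -> hh s1 x = hh s2 x.
Proof. intro P. unfold hh, gtc, ltc. rewrite !(perm_filter_len _ _ _ P). auto. Qed.
Lemma RR_perm s1 s2 : Permutation s1 s2 -> RR s1 -> RR s2.
Proof. intros P H a b Ha Hb Hab. rewrite <- !(hh_perm _ _ _ P).
  apply H; auto; apply Permutation_in with s2; auto; apply Permutation_sym; auto. Qed.
Lemma RR_shift g l : RR (map (Z.add g) l) -> RR l.
Proof. intros H a b Ha Hb Hab.
  assert (X := H (g + a) (g + b) (in_map _ _ _ Ha) (in_map _ _ _ Hb) ltac:(lia)).
  rewrite !hh_shift in X. lia. Qed.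

Definition nonneg (t : list Z) := Forall (fun y => 0 <= y) t.

Lemma fb_split t : nonneg t -> Z.of_nat (length t) = Z.of_nat (fb t) + gtc t 0.
Proof. unfold fb, gtc. induction t; intro H; [reflexivity|]. inversion H; subst.
  specialize (IHt H3). cbn [filter]. destruct (Z.eqb_spec 0 a); destruct (Z.ltb_spec 0 a); cbn [length]; lia. Qed.

Lemma hh_zero t : nonneg t -> hh t 0 = Z.of_nat (length t) - Z.of_nat (fb t).
Proof. intro H. unfold hh. rewrite (ltc_none t 0 H). pose proof (fb_split t H). lia. Qed.

Lemma shift_pos g t : 1 <= g -> nonneg t -> Forall (fun y => 0 < y) (map (Z.add g) t).
Proof. intros Hg H. apply Forall_map. eapply Forall_impl; [|exact H]. simpl. intros. lia. Qed.

Lemma hh_mk_0 m g t : 1 <= g -> nonneg t -> hh (mk m g t) 0 = Z.of_nat (length t).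
Proof. intros Hg H. unfold hh, mk. rewrite gtc_app, ltc_app, gtc_repeat, ltc_repeat.
  rewrite gtc_all. rewrite ltc_none. rewrite length_map. simpl. lia.
  eapply Forall_impl; [|apply (shift_pos g t Hg H)]. simpl; intros; lia.
  apply shift_pos; auto. Qed.

Lemma hh_mk_s m g t b : 1 <= g -> nonneg t -> 0 <= b -> hh (mk m g t) (g + b) = hh t b + g - Z.of_nat m.
Proof. intros Hg H Hb. unfold hh, mk. rewrite gtc_app, ltc_app, gtc_repeat, ltc_repeat.
  rewrite gtc_shift, ltc_shift. destruct (Z.ltb_spec (g+b) 0); destruct (Z.ltb_spec 0 (g + b)); lia. Qed.

Lemma in_mk m g t x : In x (mk m g t) <-> (x = 0 /\ (0 < m)%nat) \/ exists b, x = g + b /\ In b t.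
Proof. unfold mk. rewrite in_app_iff, in_map_iff. split.
  - intros [H|[b [<- H]]]. left. split. apply repeat_spec in H; auto. destruct m; simpl in H; [destruct H|lia].
    right. eauto.
  - intros [[-> H]|[b [-> H]]]. left. destruct m; [lia|simpl; auto]. right. eauto. Qed.

Definition Inv (n : nat) (t : list Z) : Prop :=
  length t = n /\ nonneg t /\ ((1 <= n)%nat -> In 0 t) /\ RR t.

Lemma fb_pos t : In 0 t -> (1 <= fb t)%nat.
Proof. unfold fb. induction t; intros H. destruct H. cbn [filter].
  destruct (Z.eqb_spec 0 a); cbn [length]. lia. destruct H as [H|H]. lia. auto. Qed.

Lemma Inv_mk m g t j : (1 <= m)%nat -> (1 <= j)%nat -> Inv j t -> 1 <= g <= Z.of_nat (m + fb t - 1) ->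
  Inv (m + j) (mk m g t).
Proof.
  intros Hm Hj [L [N [Z0 R]]] Hg. specialize (Z0 Hj). assert (F := fb_pos t Z0).
  split; [|split; [|split]].
  - unfold mk. rewrite length_app, repeat_length, length_map. lia.
  - unfold mk, nonneg. apply Forall_app. split. apply Forall_forall. intros x Hx. apply repeat_spec in Hx. lia.
    eapply Forall_impl; [|apply (shift_pos g t ltac:(lia) N)]. simpl; intros; lia.
  - intros _. apply in_mk. left. split; auto.
  - intros a b Ha Hb Hab. apply in_mk in Ha, Hb.
    assert (N' := N). unfold nonneg in N. rewrite Forall_forall in N.
    destruct Ha as [[-> _]|[a' [-> Ha']]]; destruct Hb as [[-> _]|[b' [-> Hb']]].
    + lia.
    + assert (0 <= b') by (apply N; auto). rewrite hh_mk_0, hh_mk_s; auto; try lia.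
      assert (Hle : hh t b' <= hh t 0).
      { destruct (Z.eq_dec b' 0). subst; lia. apply Z.lt_le_incl. apply R; auto. specialize (N b' Hb'). lia. }
      rewrite hh_zero in Hle; auto. lia.
    + specialize (N a' Ha'). lia.
    + assert (0 <= b') by (apply N; auto). assert (0 <= a') by (apply N; auto). rewrite !hh_mk_s; auto; try lia.
      assert (hh t b' < hh t a') by (apply R; auto; lia). lia.
Qed.

Lemma Inv_rep n : Inv n (repeat 0 n).
Proof.
  split; [|split; [|split]].
  - apply repeat_length.
  - unfold nonneg. apply Forall_forall. intros x Hx. apply repeat_spec in Hx. lia.
  - intros H. destruct n. lia. simpl; auto.
  - intros a b Ha Hb. apply repeat_spec in Ha, Hb. lia.
Qed.

Lemma Lf_Inv : forall f n t, In t (Lf f n) -> Inv n t.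
Proof.
  induction f; intros n t H. destruct H.
  apply in_Lf in H as [->|[j [t' [g [Hj [Ht' [Hg ->]]]]]]]. apply Inv_rep.
  replace n with ((n - j) + j)%nat at 1 by lia. apply Inv_mk; auto; try lia.
Qed.

Lemma S1_flat_map {X Y} (g : Y -> Z) (F : X -> list Y) l : S1 g (flat_map F l) = S1 (fun x => S1 g (F x)) l.
Proof. induction l; simpl; auto. rewrite S1_app, S1_cons, IHl. auto. Qed.
Lemma S1_const {X} c (l : list X) : S1 (fun _ => c) l = c * Z.of_nat (length l).
Proof. induction l. rewrite S1_nil. simpl. lia. rewrite S1_cons, IHl. simpl length. lia. Qed.

Lemma fb_app a b : fb (a ++ b) = (fb a + fb b)%nat.
Proof. unfold fb. rewrite filter_app, length_app. auto. Qed.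
Lemma fb_mk m g t : 1 <= g -> nonneg t -> fb (mk m g t) = m.
Proof. intros Hg H. unfold mk. rewrite fb_app.
  assert (fb (repeat 0 m) = m). { unfold fb. clear. induction m; simpl; auto. }
  assert (fb (map (Z.add g) t) = 0%nat).
  { unfold fb. clear -Hg H. revert H. induction t as [|a t IHt]; intro H; [reflexivity|]. inversion H; subst. cbn [filter map].
    destruct (Z.eqb_spec 0 (g + a)). lia. auto. }
  lia. Qed.

Lemma Lf_count : forall f n, (n < f)%nat -> (1 <= n)%nat ->
  S1 (fun _ => 1) (Lf f n) = Ast n /\ S1 (fun t => Z.of_nat (fb t)) (Lf f n) = Bst n.
Proof.
  induction f; intros n Hn H1. lia.
  destruct n as [|k]. lia.
  destruct (state_sums k) as [IC [IH [IE IB]]].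
  cbn [Lf]. replace (S k - 1)%nat with k by lia.
  rewrite !S1_cons, !S1_flat_map.
  split.
  - rewrite (S1_ext_in _ (fun j => (zj k - zj j) * Ast j + Bst j)).
    2:{ intros j Hj. apply in_seq in Hj. rewrite S1_flat_map.
        destruct (IHf j ltac:(lia) ltac:(lia)) as [I1 I2].
        rewrite (S1_ext_in _ (fun t => (zj k - zj j) * 1 + Z.of_nat (fb t))).
        2:{ intros t Ht. rewrite S1_map, S1_const. unfold gs. rewrite length_map, length_seq. unfold zj. lia. }
        rewrite S1_add, S1_scal, I1, I2. ring. }
    rewrite S1_add.
    rewrite (S1_ext_in _ (fun j => (zj k + 1 - zj j) * Ast j - Ast j)) by (intros; ring).
    rewrite S1_sub. simpl (S1 (fun _ => 1) [repeat 0 (S k)]). lia.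
  - rewrite (S1_ext_in _ (fun j => (zj k + 1 - zj j) * (zj k - zj j) * Ast j + (zj k + 1 - zj j) * Bst j)).
    2:{ intros j Hj. apply in_seq in Hj. rewrite S1_flat_map.
        destruct (IHf j ltac:(lia) ltac:(lia)) as [I1 I2].
        rewrite (S1_ext_in _ (fun t => (zj k + 1 - zj j) * (zj k - zj j) * 1 + (zj k + 1 - zj j) * Z.of_nat (fb t))).
        2:{ intros t Ht. rewrite S1_map.
            destruct (Lf_Inv _ _ _ Ht) as [_ [N _]].
            rewrite (S1_ext_in _ (fun _ => Z.of_nat (S k - j))).
            2:{ intros g Hg. apply in_gs in Hg. rewrite fb_mk; auto; lia. }
            rewrite S1_const. unfold gs. rewrite length_map, length_seq. unfold zj.
              replace (Z.of_nat (S k - j)) with (Z.of_nat k + 1 - Z.of_nat j) by lia.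
              replace (Z.of_nat (S k - j + fb t - 1)) with (Z.of_nat k - Z.of_nat j + Z.of_nat (fb t)) by lia. ring. }
        rewrite S1_add, !S1_scal, I1, I2. ring. }
    rewrite S1_add. replace (fb (repeat 0 (S k))) with (S k).
    2:{ unfold fb. clear. induction k; simpl; auto. }
    unfold zj in *. lia.
Qed.

Lemma perm_fb t1 t2 : Permutation t1 t2 -> fb t1 = fb t2.
Proof. unfold fb. apply perm_filter_len. Qed.
Lemma fb_rep n : fb (repeat 0 n) = n.
Proof. unfold fb. induction n; simpl; auto. Qed.

Lemma map_add0 t : map (Z.add 0) t = t.
Proof. rewrite <- (map_id t) at 2. apply map_ext. intros; lia. Qed.
Lemma map_shift_inv g t : map (Z.add (-g)) (map (Z.add g) t) = t.
Proof. rewrite map_map. rewrite (map_ext _ (Z.add 0)) by (intros; lia). apply map_add0. Qed.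

Lemma shift0 t1 t2 c : nonneg t1 -> nonneg t2 -> In 0 t1 -> In 0 t2 ->
  Permutation t1 (map (Z.add c) t2) -> c = 0.
Proof.
  intros N1 N2 I1 I2 P. unfold nonneg in *. rewrite Forall_forall in *.
  assert (A := Permutation_in _ P I1). apply in_map_iff in A as [y [Hy Iy]]. specialize (N2 y Iy).
  assert (B : In (c + 0) (map (Z.add c) t2)) by (apply in_map; auto).
  apply (Permutation_in _ (Permutation_sym P)) in B. specialize (N1 _ B). lia.
Qed.

Lemma perm_unique : forall f n t1 t2, In t1 (Lf f n) -> In t2 (Lf f n) -> Permutation t1 t2 -> t1 = t2.
Proof.
  induction f; intros n t1 t2 H1 H2 P. destruct H1.
  apply in_Lf in H1 as [->|[j1 [t1' [g1 [Hj1 [Ht1 [Hg1 ->]]]]]]];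
  apply in_Lf in H2 as [->|[j2 [t2' [g2 [Hj2 [Ht2 [Hg2 ->]]]]]]]; auto.
  - destruct (Lf_Inv _ _ _ Ht2) as [_ [N2 _]]. apply perm_fb in P. rewrite fb_rep, fb_mk in P; auto; lia.
  - destruct (Lf_Inv _ _ _ Ht1) as [_ [N1 _]]. apply perm_fb in P. rewrite fb_rep, fb_mk in P; auto; lia.
  - destruct (Lf_Inv _ _ _ Ht1) as [L1 [N1 [Z1 _]]]. destruct (Lf_Inv _ _ _ Ht2) as [L2 [N2 [Z2 _]]].
    assert (E := perm_fb _ _ P). rewrite !fb_mk in E; auto; try lia.
    assert (Ej : j2 = j1) by lia. rewrite Ej in *.
    unfold mk in P. apply Permutation_app_inv_l in P.
    apply (Permutation_map (Z.add (-g1))) in P. rewrite map_shift_inv, map_map in P.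
    assert (Ec : g2 = g1).
    { assert (c0 := shift0 t1' t2' (-g1 + g2) N1 N2 (Z1 ltac:(lia)) (Z2 ltac:(lia))).
      rewrite (map_ext (fun x => - g1 + (g2 + x)) (Z.add (-g1 + g2))) in P by (intros; lia).
      specialize (c0 P). lia. }
    subst g2. rewrite (map_ext (fun x => - g1 + (g1 + x)) (Z.add 0)), map_add0 in P by (intros; lia).
    rewrite (IHf j1 t1' t2' Ht1 Ht2 P). auto.
Qed.

Lemma NoDup_flat_map' {X Y} (F : X -> list Y) l : NoDup l -> (forall x, In x l -> NoDup (F x)) ->
  (forall x y z, In x l -> In y l -> In z (F x) -> In z (F y) -> x = y) -> NoDup (flat_map F l).
Proof.
  induction l; intros Nl NF Inj; simpl. constructor. inversion Nl; subst.
  apply NoDup_app. apply NF; left; auto. apply IHl; auto. intros; apply NF; right; auto.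
  intros x y z Hx Hy Hzx Hzy; apply (Inj x y z); auto; right; auto.
  intros z Hz Hz'. apply in_flat_map in Hz' as [y [Hy Hz']].
  assert (a = y) by (apply (Inj a y z); auto; [left|right]; auto). subst. auto.
Qed.

Lemma mk_inj_g m g1 g2 t : t <> [] -> mk m g1 t = mk m g2 t -> g1 = g2.
Proof. intros Ht E. unfold mk in E. apply app_inv_head in E. destruct t. congruence.
  simpl in E. injection E. lia. Qed.

Lemma NoDup_Lf : forall f n, NoDup (Lf f n).
Proof.
  induction f; intros n. constructor. cbn [Lf]. constructor.
  - intro H. apply in_flat_map in H as [j [Hj H]]. apply in_seq in Hj.
    apply in_flat_map in H as [t' [Ht' H]]. apply in_map_iff in H as [g [E Hg]]. apply in_gs in Hg.
    destruct (Lf_Inv _ _ _ Ht') as [_ [N _]].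
    assert (X := f_equal fb E). rewrite fb_rep, fb_mk in X; auto; lia.
  - apply NoDup_flat_map'. apply seq_NoDup.
    + intros j Hj. apply in_seq in Hj. apply NoDup_flat_map'. apply IHf.
      * intros t Ht. destruct (Lf_Inv _ _ _ Ht) as [L [N [Z0 _]]].
        apply FinFun.Injective_map_NoDup.
        { intros g1 g2 E. apply (mk_inj_g (n - j) g1 g2 t); auto. intro E0; rewrite E0 in L; simpl in L; lia. }
        unfold gs. apply FinFun.Injective_map_NoDup. intros x y; apply Nat2Z.inj. apply seq_NoDup.
      * intros t1 t2 z Ht1 Ht2 Hz1 Hz2.
        apply in_map_iff in Hz1 as [g1 [E1 Hg1]]. apply in_map_iff in Hz2 as [g2 [E2 Hg2]].
        rewrite <- E2 in E1. apply in_gs in Hg1, Hg2. apply (perm_unique f j); auto.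
        destruct (Lf_Inv _ _ _ Ht1) as [L1 [N1 [Z1 _]]]. destruct (Lf_Inv _ _ _ Ht2) as [L2 [N2 [Z2 _]]].
        unfold mk in E1. apply app_inv_head in E1.
        assert (P : Permutation t1 (map (Z.add (g2 - g1)) t2)).
        { apply (f_equal (map (Z.add (-g1)))) in E1. rewrite map_shift_inv, map_map in E1. rewrite E1.
          rewrite (map_ext (fun x => - g1 + (g2 + x)) (Z.add (g2 - g1))) by (intros; lia). auto. }
        assert (c0 := shift0 _ _ _ N1 N2 (Z1 ltac:(lia)) (Z2 ltac:(lia)) P).
        rewrite c0, map_add0 in P. auto.
    + intros j1 j2 z Hj1 Hj2 H1 H2. apply in_seq in Hj1, Hj2.
      apply in_flat_map in H1 as [t1 [Ht1 H1]]. apply in_map_iff in H1 as [g1 [E1 Hg1]].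
      apply in_flat_map in H2 as [t2 [Ht2 H2]]. apply in_map_iff in H2 as [g2 [E2 Hg2]].
      apply in_gs in Hg1, Hg2.
      destruct (Lf_Inv _ _ _ Ht1) as [_ [N1 _]]. destruct (Lf_Inv _ _ _ Ht2) as [_ [N2 _]].
      assert (X1 := f_equal fb E1). assert (X2 := f_equal fb E2).
      rewrite fb_mk in X1, X2; auto; lia.
Qed.

Lemma exists_min (s : list Z) : s <> [] -> exists mu, In mu s /\ forall x, In x s -> mu <= x.
Proof.
  induction s as [|a s IH]; intro H. congruence.
  destruct s as [|b s']. exists a. split. left; auto. intros x [<-|[]]. lia.
  destruct IH as [mu [Hm Hx]]. congruence.
  destruct (Z.le_gt_cases a mu).
  - exists a. split. left; auto. intros x [<-|Hx']. lia. specialize (Hx x Hx'). lia.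
  - exists mu. split. right; auto. intros x [<-|Hx']. lia. auto.
Qed.

Lemma perm_split {X} (p : X -> bool) l : Permutation l (filter p l ++ filter (fun x => negb (p x)) l).
Proof.
  induction l; simpl. auto. destruct (p a); simpl.
  - constructor. auto.
  - apply Permutation_cons_app. auto.
Qed.

Lemma filter_eq_rep mu l : filter (fun x => x =? mu) l = repeat mu (length (filter (fun x => x =? mu) l)).
Proof. induction l; simpl; auto. destruct (Z.eqb_spec a mu); simpl; auto. subst. f_equal. auto. Qed.

Lemma complete : forall n s f, length s = n -> RR s -> (n < f)%nat ->
  exists t, In t (Lf f n) /\ config_equiv s t.
Proof.
  intro n. induction n as [n IHn] using (well_founded_induction lt_wf).
  intros s f Hl HR Hf. destruct f as [|f]. lia.
  destruct s as [|x0 s0].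
  - simpl in Hl. subst n. exists []. split. apply in_Lf. left. auto. exists 0. simpl. auto.
  - set (s := x0 :: s0) in *.
    destruct (exists_min s ltac:(discriminate)) as [mu [Hmu Hmin]].
    set (P := filter (fun x => x =? mu) s). set (rest := filter (fun x => negb (x =? mu)) s).
    assert (Ps : Permutation s (P ++ rest)) by apply perm_split.
    set (m := length P).
    assert (EP : P = repeat mu m) by apply filter_eq_rep.
    assert (Hm : (1 <= m)%nat).
    { unfold m, P. assert (In mu (filter (fun x => x =? mu) s)) by (apply filter_In; split; auto; apply Z.eqb_refl).
      destruct (filter (fun x => x =? mu) s). destruct H. simpl; lia. }
    assert (Hlen : n = (m + length rest)%nat).
    { rewrite <- Hl. rewrite (Permutation_length Ps), length_app. auto. }
    assert (Rgt : forall x, In x rest -> mu < x).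
    { intros x Hx. apply filter_In in Hx as [Hx E]. specialize (Hmin x Hx). destruct (Z.eqb_spec x mu); simpl in E; lia. }
    rewrite EP in Ps.
    destruct rest as [|r0 rest0] eqn:Er.
    + exists (repeat 0 n). split. apply in_Lf. left; auto.
      exists mu. rewrite app_nil_r in Ps. rewrite map_repeat. replace (0 + mu) with mu by lia.
      simpl in Hlen. rewrite Nat.add_0_r in Hlen. rewrite Hlen. auto.
    + rewrite <- Er in *. set (j := length rest) in *.
      assert (Hj1 : (1 <= j)%nat) by (unfold j; rewrite Er; simpl; lia).
      assert (HRr : RR rest).
      { assert (Hh : forall x, In x rest -> hh s x = hh rest x - Z.of_nat m).
        { intros x Hx. specialize (Rgt x Hx). rewrite (hh_perm _ _ x Ps). unfold hh.
          rewrite gtc_app, ltc_app, gtc_repeat, ltc_repeat.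
          destruct (Z.ltb_spec x mu); destruct (Z.ltb_spec mu x); lia. }
        intros a b Ha Hb Hab.
        assert (In a s) by (apply filter_In in Ha; tauto).
        assert (In b s) by (apply filter_In in Hb; tauto).
        assert (X := HR a b H H0 Hab). rewrite !Hh in X; auto. lia. }
      destruct (IHn j ltac:(lia) rest f eq_refl HRr ltac:(lia)) as [t' [Ht' [c Pc]]].
      rewrite (map_ext (fun x => x + c) (Z.add c)) in Pc by (intros; lia).
      destruct (Lf_Inv _ _ _ Ht') as [Lt [Nt [Zt _]]]. specialize (Zt Hj1).
      assert (Hc : mu < c).
      { apply Rgt. apply (Permutation_in _ (Permutation_sym Pc)). apply in_map_iff. exists 0. split; [lia|auto]. }
      set (g := c - mu).
      assert (Ps2 : Permutation s (map (Z.add mu) (mk m g t'))).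
      { unfold mk. rewrite map_app, map_repeat, map_map. replace (mu + 0) with mu by lia.
        rewrite (map_ext (fun x => mu + (g + x)) (Z.add c)) by (intros; unfold g; lia).
        eapply Permutation_trans. exact Ps. apply Permutation_app_head. auto. }
      assert (HRt : RR (mk m g t')).
      { apply (RR_shift mu). apply (RR_perm s); auto. }
      assert (Hg : g < Z.of_nat m + Z.of_nat (fb t')).
      { assert (I0 : In 0 (mk m g t')) by (apply in_mk; left; split; auto; lia).
        assert (Ig : In (g + 0) (mk m g t')) by (apply in_mk; right; exists 0; auto).
        assert (X := HRt 0 (g + 0) I0 Ig ltac:(unfold g; lia)).
        rewrite hh_mk_0, hh_mk_s, hh_zero in X; auto; unfold g in *; lia. }
      exists (mk m g t'). split.
      * apply in_Lf. right. exists j, t', g. split. lia. split. auto. split.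
        unfold g in *. lia. f_equal. lia.
      * exists mu. rewrite (map_ext (fun x => x + mu) (Z.add mu)) by (intros; lia). auto.
Qed.

End GenS.

Section AsymS.
Local Open Scope R_scope.

Lemma alpha_bounds (al : R) : al ^ 3 - 5 * al ^ 2 + 7 * al - 4 = 0 ->
  32055/10000 < al < 32057/10000.
Proof.
  intro H.
  assert (Q : forall lo, lo*lo - 5*lo + 7 - 1 > 0 \/ True) by auto.
  split.
  - destruct (Rlt_or_le (32055/10000) al) as [h|h]; [exact h|exfalso].
    set (lo := 32055/10000) in *.
    assert (Hq : al^2 + (lo-5)*al + (lo^2 - 5*lo + 7) > 0).
    { assert (0 <= (al + (lo-5)/2)^2) by apply pow2_ge_0. unfold lo in *. nra. }
    assert (Hf : lo^3 - 5*lo^2 + 7*lo - 4 < 0) by (unfold lo; lra).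
    assert (E : al ^ 3 - 5 * al ^ 2 + 7 * al - 4 =
      (al - lo) * (al^2 + (lo-5)*al + (lo^2 - 5*lo + 7)) + (lo^3 - 5*lo^2 + 7*lo - 4)) by ring.
    nra.
  - destruct (Rlt_or_le al (32057/10000)) as [h|h]; [exact h|exfalso].
    set (lo := 32057/10000) in *.
    assert (Hq : al^2 + (lo-5)*al + (lo^2 - 5*lo + 7) > 0).
    { assert (0 <= (al + (lo-5)/2)^2) by apply pow2_ge_0. unfold lo in *. nra. }
    assert (Hf : lo^3 - 5*lo^2 + 7*lo - 4 > 0) by (unfold lo; lra).
    assert (E : al ^ 3 - 5 * al ^ 2 + 7 * al - 4 =
      (al - lo) * (al^2 + (lo-5)*al + (lo^2 - 5*lo + 7)) + (lo^3 - 5*lo^2 + 7*lo - 4)) by ring.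
    nra.
Qed.

Lemma pow_div_R (x y : R) (n : nat) : y <> 0 -> (x / y) ^ n = x ^ n / y ^ n.
Proof.
  intro hy. induction n; simpl. field. rewrite IHn. field. split; auto. apply pow_nonzero; auto.
Qed.

Definition cst (al : R) := (2*al^2-4*al+3)/(11*al^2-23*al+20).

Lemma cst_bounds (al : R) : al ^ 3 - 5 * al ^ 2 + 7 * al - 4 = 0 ->
  0 < cst al /\ 1808 / 10000 < cst al < 1810 / 10000.
Proof.
  intro H. destruct (alpha_bounds al H) as [h1 h2].
  assert (D : 11*al^2-23*al+20 > 0) by nra.
  assert (Hc : cst al * (11*al^2-23*al+20) = 2*al^2-4*al+3).
  { unfold cst. field. lra. }
  assert (N1 : 1808/10000 * (11*al^2-23*al+20) < 2*al^2-4*al+3) by nra.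
  assert (N2 : 2*al^2-4*al+3 < 1810/10000 * (11*al^2-23*al+20)) by nra.
  split; [|split]; nra.
Qed.

Lemma asym (al : R) (u : nat -> R) :
  al ^ 3 - 5 * al ^ 2 + 7 * al - 4 = 0 ->
  (forall n, (2 <= n)%nat -> u (S (S (S n))) = 5 * u (S (S n)) - 7 * u (S n) + 4 * u n) ->
  u 2%nat = 2 -> u 3%nat = 6 -> u 4%nat = 19 ->
  Un_cv (fun n => u n / al ^ n) (cst al).
Proof.
  intros H Hrec u2 u3 u4.
  destruct (alpha_bounds al H) as [h1 h2].
  set (c := cst al).
  set (p := al - 5). set (q := al^2 - 5*al + 7).
  set (e := fun n => u n - c * al ^ n).
  assert (D : 11*al^2-23*al+20 > 0) by nra.
  assert (Hc : c * (11*al^2-23*al+20) = 2*al^2-4*al+3).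
  { unfold c, cst. field. lra. }
  assert (Haq : al * q = 4) by (unfold q; nra).
  assert (Z : forall k, e (S (S (S (S k)))) + p * e (S (S (S k))) + q * e (S (S k)) = 0).
  { induction k.
    - unfold e. rewrite u2, u3, u4. unfold p, q. simpl.
      assert (E : al^2*(3*al^2-10*al+7) = 11*al^2-23*al+20 + (3*al+5)*(al ^ 3 - 5 * al ^ 2 + 7 * al - 4)) by ring.
      rewrite H in E. nra.
    - assert (R1 := Hrec (S (S k)) ltac:(lia)).
      assert (E : e (S (S (S (S (S k))))) + p * e (S (S (S (S k)))) + q * e (S (S (S k))) =
        al * (e (S (S (S (S k)))) + p * e (S (S (S k))) + q * e (S (S k)))
        + (u (S (S (S (S (S k))))) - 5 * u (S (S (S (S k)))) + 7 * u (S (S (S k))) - 4 * u (S (S k))) + (4 - al*q) * u (S (S k))).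
      { unfold e, p, q. simpl. ring. }
      rewrite E, IHk, R1, Haq. ring. }
  set (r := 31/10).
  assert (Hp : Rabs p <= 18/10) by (unfold p; rewrite Rabs_left by lra; lra).
  assert (Hq0 : 0 < q) by (unfold q; nra).
  assert (Hq1 : q <= 125/100) by (unfold q; nra).
  set (K := Rabs (e 2%nat) / r^2 + Rabs (e 3%nat) / r^3).
  assert (K0 : 0 <= K).
  { unfold K. apply Rplus_le_le_0_compat; apply Rmult_le_pos; try apply Rabs_pos;
    left; apply Rinv_0_lt_compat; unfold r; lra. }
  assert (B : forall k, Rabs (e (S (S k))) <= K * r ^ (S (S k)) /\ Rabs (e (S (S (S k)))) <= K * r ^ (S (S (S k)))).
  { induction k.
    - assert (r2 : 0 < r^2) by (apply pow_lt; unfold r; lra).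
      assert (r3 : 0 < r^3) by (apply pow_lt; unfold r; lra).
      assert (E2 : Rabs (e 2%nat) / r^2 * r^2 = Rabs (e 2%nat)) by (field; unfold r; lra).
      assert (E3 : Rabs (e 3%nat) / r^3 * r^3 = Rabs (e 3%nat)) by (field; unfold r; lra).
      assert (P2 : 0 <= Rabs (e 2%nat) / r^2) by (apply Rmult_le_pos; [apply Rabs_pos|left; apply Rinv_0_lt_compat; lra]).
      assert (P3 : 0 <= Rabs (e 3%nat) / r^3) by (apply Rmult_le_pos; [apply Rabs_pos|left; apply Rinv_0_lt_compat; lra]).
      split; unfold K; rewrite Rmult_plus_distr_r.
      + assert (0 <= Rabs (e 3%nat) / r^3 * r^2) by (apply Rmult_le_pos; lra). lra.
      + assert (0 <= Rabs (e 2%nat) / r^2 * r^3) by (apply Rmult_le_pos; lra). lra.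
    - destruct IHk as [I1 I2]. split; [exact I2|].
      assert (E : e (S (S (S (S k))))= - p * e (S (S (S k))) - q * e (S (S k))) by (pose proof (Z k); lra).
      rewrite E.
      assert (rk : 0 < r ^ k) by (apply pow_lt; unfold r; lra).
      assert (T : Rabs (- p * e (S (S (S k))) - q * e (S (S k))) <= Rabs p * Rabs (e (S (S (S k)))) + q * Rabs (e (S (S k)))).
      { unfold Rminus. eapply Rle_trans. apply Rabs_triang.
        rewrite Rabs_Ropp, !Rabs_mult, Rabs_Ropp, (Rabs_right q) by lra. lra. }
      eapply Rle_trans; [exact T|].
      assert (0 <= Rabs (e (S (S (S k))))) by apply Rabs_pos.
      assert (0 <= Rabs p) by apply Rabs_pos.
      assert (X1 : Rabs p * Rabs (e (S (S (S k)))) <= 18/10 * (K * r ^ S (S (S k)))).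
      { apply Rmult_le_compat; auto. }
      assert (X2 : q * Rabs (e (S (S k))) <= 125/100 * (K * r ^ S (S k))).
      { apply Rmult_le_compat; [left; exact Hq0|apply Rabs_pos|exact Hq1|exact I1]. }
      assert (W0 : 0 <= K * r ^ k) by (apply Rmult_le_pos; lra).
      replace (K * r ^ S (S (S k))) with (r*r*r * (K * r ^ k)) in X1 by (simpl; ring).
      replace (K * r ^ S (S k)) with (r*r * (K * r ^ k)) in X2 by (simpl; ring).
      replace (K * r ^ S (S (S (S k)))) with (r*r*r*r * (K * r ^ k)) by (simpl; ring).
      unfold r in *. lra. }
  intros eps Heps.
  assert (Hx : Rabs (r / al) < 1).
  { rewrite Rabs_right. apply Rmult_lt_reg_r with al; [lra|]. unfold Rdiv. rewrite Rmult_assoc, Rinv_l by lra. unfold r. lra.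
    left. apply Rdiv_lt_0_compat; unfold r; lra. }
  destruct (pow_lt_1_zero (r/al) Hx (eps / (K+1))) as [N HN].
  { apply Rdiv_lt_0_compat; lra. }
  exists (Nat.max N 2). intros n Hn.
  unfold R_dist.
  assert (an : 0 < al ^ n) by (apply pow_lt; lra).
  replace (u n / al ^ n - c) with (e n / al ^ n) by (unfold e; field; lra).
  destruct n as [|[|n]]; try lia.
  specialize (HN (S (S n)) ltac:(lia)).
  rewrite pow_div_R in HN by lra.
  assert (rn : 0 < r ^ S (S n)) by (apply pow_lt; unfold r; lra).
  assert (an2 : 0 < al ^ S (S n)) by (apply pow_lt; lra).
  unfold Rdiv in *. rewrite Rabs_mult, Rabs_inv in *.
  rewrite (Rabs_right (al ^ S (S n))) in * by lra.
  rewrite (Rabs_right (r ^ S (S n))) in HN by lra.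
  destruct (B n) as [B1 _].
  assert (ia : 0 < / al ^ S (S n)) by (apply Rinv_0_lt_compat; lra).
  apply Rle_lt_trans with (K * r ^ S (S n) * / al ^ S (S n)).
  { apply Rmult_le_compat_r; lra. }
  apply Rle_lt_trans with (K * (eps * / (K+1))).
  { rewrite Rmult_assoc. apply Rmult_le_compat_l; lra. }
  assert (Ki : K * / (K+1) < 1).
  { apply Rmult_lt_reg_r with (K+1); [lra|]. rewrite Rmult_assoc, Rinv_l by lra. lra. }
  replace (K * (eps * / (K + 1))) with (eps * (K * / (K+1))) by ring.
  nra.
Qed.

End AsymS.

Section FinalS.
Local Open Scope Z_scope.

Lemma uniq_equiv n t1 t2 : In t1 (Lf (S n) n) -> In t2 (Lf (S n) n) -> config_equiv t1 t2 -> t1 = t2.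
Proof.
  intros H1 H2 [c P].
  destruct (Lf_Inv _ _ _ H1) as [L1 [N1 [Z1 _]]]. destruct (Lf_Inv _ _ _ H2) as [L2 [N2 [Z2 _]]].
  destruct n as [|n].
  - destruct t1; destruct t2; simpl in *; try discriminate; auto.
  - rewrite (map_ext (fun x => x + c) (Z.add c)) in P by (intros; lia).
    assert (c0 := shift0 _ _ _ N1 N2 (Z1 ltac:(lia)) (Z2 ltac:(lia)) P).
    rewrite c0, map_add0 in P. apply (perm_unique (S (S n)) (S n)); auto.
Qed.

Lemma FOP_of (l : list (list Z)) : NoDup l -> (forall x y, In x l -> In y l -> config_equiv x y -> x = y) ->
  ForallOrdPairs (fun s t => ~ config_equiv s t) l.
Proof.
  induction l as [|a l IH]; intros Nd U. constructor. inversion Nd; subst. constructor.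
  - apply Forall_forall. intros y Hy E. assert (a = y) by (apply U; auto; [left|right]; auto). subst. contradiction.
  - apply IH; auto. intros; apply U; auto; right; auto.
Qed.

Lemma len_Ast n : (1 <= n)%nat -> Z.of_nat (length (Lf (S n) n)) = Ast n.
Proof. intro H. destruct (Lf_count (S n) n ltac:(lia) H) as [A _]. rewrite S1_const in A. lia. Qed.

End FinalS.

Open Scope R_scope.

Theorem corollary4p4 :
  forall alpha : R,
    alpha ^ 3 - 5 * alpha ^ 2 + 7 * alpha - 4 = 0 ->
    exists a : nat -> nat,
      (forall n : nat, num_period_classes n (a n)) /\
      exists c : R,
        0 < c /\ 1808 / 10000 < c < 1810 / 10000 /\
        Un_cv (fun n => INR (a n) / alpha ^ n) c.
Proof.
  intros alpha Hal.
  exists (fun n => length (Lf (S n) n)).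
  split.
  - intro n. exists (Lf (S n) n). split; [reflexivity|]. split; [|split].
    + apply Forall_forall. intros t Ht. destruct (Lf_Inv _ _ _ Ht) as [L [_ [_ R]]]. split; auto. apply RR_period; auto.
    + apply FOP_of. apply NoDup_Lf. intros; apply (uniq_equiv n); auto.
    + intros s Hs Hp. destruct (complete n s (S n) Hs (period_RR s Hp) (le_n _)) as [t [Ht E]].
      apply Exists_exists. eauto.
  - exists (cst alpha). destruct (cst_bounds alpha Hal) as [c0 [c1 c2]].
    split; [auto|]. split; [split; auto|].
    assert (U : forall n, (1 <= n)%nat -> INR (length (Lf (S n) n)) = IZR (Ast n)).
    { intros n Hn. rewrite INR_IZR_INZ, len_Ast; auto. }
    apply asym; auto.
    + intros n Hn. rewrite !U by lia. rewrite (Ast_rec n Hn).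
      rewrite !plus_IZR, !minus_IZR, !mult_IZR. ring.
Qed.
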